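(* Let $\mathcal A_V$ be the algebra of Laurent polynomials in $a_V,b_V,c_V,d_V$ with the log-canonical Poisson bracket $\{a_V,b_V\}=a_Vb_V$, $\{a_V,c_V\}=0$, $\{a_V,d_V\}=-\tfrac12 a_Vd_V$, $\{b_V,c_V\}=0$, $\{b_V,d_V\}=-\tfrac12 b_Vd_V$, $\{c_V,d_V\}=-\tfrac12 c_Vd_V$. Let $\mathcal A_{IV}$ be the algebra of Laurent polynomials in $a,b,c,d,e,f,h$ with the log-canonical bracket $\{a,b\}=0,\ \{a,c\}=-\tfrac12 ac,\ \{a,d\}=-\tfrac12 ad,\ \{a,e\}=0,\ \{a,f\}=\tfrac12 af,\ \{a,h\}=\tfrac12 ah,$ $\{b,c\}=\tfrac14 bc,\ \{b,d\}=0,\ \{b,e\}=\tfrac14 be,\ \{b,f\}=\tfrac14 bf,\ \{b,h\}=-\tfrac14 bh,$ $\{c,d\}=-\tfrac14 cd,\ \{c,e\}=\tfrac14 ce,\ \{c,f\}=0,\ \{c,h\}=\tfrac14 ch,$ $\{d,e\}=-\tfrac14 de,\ \{d,f\}=\tfrac14 df,\ \{d,h\}=\tfrac14 dh,$ $\{e,f\}=-\tfrac14 ef,\ \{e,h\}=0,\ \{f,h\}=\tfrac14 fh$. Then the assignment $a_V\mapsto ab^2$, $b_V\mapsto bf$, $c_V\mapsto bc$, $d_V\mapsto bd$ defines an injective Poisson homomorphism $\mathcal A_V\to\mathcal A_{IV}$, so that $\mathcal A_V$ is realised as the Poisson subalgebra of $\mathcal A_{IV}$ of functions of $ab^2,bf,bc,bd$;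 moreover $h$ Poisson commutes with this subalgebra.
   Context: A log-canonical bracket is extended from the generators to all Laurent polynomials by bilinearity, antisymmetry and the Leibniz rule. *)

(* Defs.v *)
From HB Require Import structures.
From mathcomp Require Import all_boot all_order all_algebra.
From mathcomp Require Import finmap.
Set Implicit Arguments. Unset Strict Implicit. Unset Printing Implicit Defensive.
Import Order.TTheory GRing.Theory Num.Theory.
Local Open Scope ring_scope.


(* Laurent polynomials in n variables x_0..x_{n-1} over K:
   finitely supported maps from exponent vectors (Z^n = 'rV[int]_n) to K.
   p alpha is the coefficient of the monomial x^alpha. *)
Definition laurent (K : fieldType) (n : nat) := {fsfun 'rV[int]_n -> K with 0}.

Section Laurent.
Variables (K : fieldType) (n : nat).
Implicit Types (p q : laurent K n) (c : K) (a b : 'rV[int]_n).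

Definition lmono a c : laurent K n := [fsfun x in [fset a]%fset => c | 0].

Definition lvar (i : 'I_n) : laurent K n := lmono (delta_mx 0 i) 1.

Definition lone : laurent K n := lmono 0 1.

Definition lzero : laurent K n := lmono 0 0.

Definition ladd p q : laurent K n :=
  [fsfun x in (finsupp p `|` finsupp q)%fset => p x + q x | 0].

Definition lscale c p : laurent K n :=
  [fsfun x in finsupp p => c * p x | 0].

Definition lmul p q : laurent K n :=
  [fsfun g in [fset (a + b)%R | a in finsupp p, b in finsupp q]%fset =>
     \sum_(a <- finsupp p) \sum_(b <- finsupp q)
        (if (a + b)%R == g then p a * q b else 0) | 0].

(* The log-canonical bracket with (skew) coefficient matrix Omega, i.e.
   {x_i, x_j} = Omega i j * x_i x_j, extended by bilinearity, antisymmetry and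
   Leibniz.  On monomials this is {x^a, x^b} = (a Omega b^T) x^(a+b). *)
Definition lc_pairing (Omega : 'M[K]_n) a b : K :=
  \sum_(i < n) \sum_(j < n) ((a 0 i)%:~R * (b 0 j)%:~R * Omega i j).

Definition lbracket (Omega : 'M[K]_n) p q : laurent K n :=
  [fsfun g in [fset (a + b)%R | a in finsupp p, b in finsupp q]%fset =>
     \sum_(a <- finsupp p) \sum_(b <- finsupp q)
        (if (a + b)%R == g then p a * q b * lc_pairing Omega a b else 0) | 0].

End Laurent.

Definition skew_of (K : fieldType) (n : nat) (up : nat -> nat -> K) : 'M[K]_n :=
  \matrix_(i < n, j < n)
    (if (i < j)%N then up i j else if (j < i)%N then - up j i else 0).

(* A_V: variables a_V,b_V,c_V,d_V = x_0,x_1,x_2,x_3 *)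
Definition upV (K : fieldType) (i j : nat) : K :=
  let h := (2%:R)^-1 in
  match i, j with
  | 0, 1 => 1
  | 0, 2 => 0
  | 0, 3 => - h
  | 1, 2 => 0
  | 1, 3 => - h
  | 2, 3 => - h
  | _, _ => 0
  end.

Definition OmegaV (K : fieldType) : 'M[K]_4 := skew_of 4 (@upV K).

(* A_IV: variables a,b,c,d,e,f,h = x_0,...,x_6 *)
Definition upIV (K : fieldType) (i j : nat) : K :=
  let h := (2%:R)^-1 in
  let q := (4%:R)^-1 in
  match i, j with
  | 0, 1 => 0 | 0, 2 => - h | 0, 3 => - h | 0, 4 => 0 | 0, 5 => h | 0, 6 => h
  | 1, 2 => q | 1, 3 => 0 | 1, 4 => q | 1, 5 => q | 1, 6 => - q
  | 2, 3 => - q | 2, 4 => q | 2, 5 => 0 | 2, 6 => q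
  | 3, 4 => - q | 3, 5 => q | 3, 6 => q
  | 4, 5 => - q | 4, 6 => 0
  | 5, 6 => q
  | _, _ => 0
  end.

Definition OmegaIV (K : fieldType) : 'M[K]_7 := skew_of 7 (@upIV K).

(* Main.v *)
Require Import Defs.
From HB Require Import structures.
From mathcomp Require Import all_boot all_order all_algebra.
From mathcomp Require Import finmap ring.
Set Implicit Arguments. Unset Strict Implicit.
Import GRing.Theory.
Local Open Scope ring_scope.

Section S.
Variable K : fieldType.

Lemma coef_fs n (S : {fset 'rV[int]_n}) (F : 'rV[int]_n -> K) g :
  (forall g, g \notin S -> F g = 0) -> [fsfun x in S => F x | 0] g = F g.
Proof. by move=> H; rewrite fsfun_fun; case: ifPn => // /H ->. Qed.

Lemma sum_supp n (p : laurent K n) (S : {fset 'rV[int]_n}) (G : 'rV[int]_n -> K) :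
  (forall a, a \notin S -> p a = 0) -> (forall a, p a = 0 -> G a = 0) ->
  \sum_(a <- finsupp p) G a = \sum_(a <- S) G a.
Proof.
move=> HS HG; apply: big_fset_incl.
  apply/fsubsetP => a; rewrite mem_finsupp; apply: contraR => /HS ->; by rewrite eqxx.
by move=> x _; rewrite memNfinsupp => /eqP; exact: HG.
Qed.

Definition genmul n (W : 'rV[int]_n -> 'rV[int]_n -> K) (p q : laurent K n) : laurent K n :=
  [fsfun g in [fset (a + b)%R | a in finsupp p, b in finsupp q]%fset =>
     \sum_(a <- finsupp p) \sum_(b <- finsupp q)
        (if (a + b)%R == g then p a * q b * W a b else 0) | 0].

Lemma genmulE n W (p q : laurent K n) g : genmul W p q g =
  \sum_(a <- finsupp p) \sum_(b <- finsupp q)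
        (if (a + b)%R == g then p a * q b * W a b else 0).
Proof.
apply: coef_fs => {}g Hg; apply: big1_seq => a /= ap; apply: big1_seq => b /= bq.
case: eqP => // eg; case/negP: Hg; rewrite -eg; apply/imfset2P; exists a => //; by exists b.
Qed.

Lemma lmul_gen n (p q : laurent K n) : lmul p q = genmul (fun _ _ => 1) p q.
Proof.
apply/fsfunP => g; rewrite !fsfun_fun; case: ifP => // _.
by apply: eq_bigr => a _; apply: eq_bigr => b _; rewrite mulr1.
Qed.

Lemma lmonoE n a (c : K) (g : 'rV[int]_n) : lmono a c g = if g == a then c else 0.
Proof. by rewrite fsfun_fun inE. Qed.

Lemma laddE n (p q : laurent K n) g : ladd p q g = p g + q g.
Proof.
apply: coef_fs => {}g; rewrite inE negb_or !memNfinsupp => /andP[/eqP -> /eqP ->].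
by rewrite addr0.
Qed.

Lemma lscaleE n c (p : laurent K n) g : lscale c p g = c * p g.
Proof. by apply: coef_fs => {}g; rewrite memNfinsupp => /eqP ->; rewrite mulr0. Qed.

Lemma lmul_mono n (a b : 'rV[int]_n) (c d : K) : lmul (lmono a c) (lmono b d) = lmono (a + b) (c * d).
Proof.
apply/fsfunP => g; rewrite lmul_gen genmulE.
rewrite (@sum_supp _ _ [fset a]%fset); last first.
- by move=> x ->; apply: big1 => y _; rewrite !mul0r; case: ifP.
- by move=> x; rewrite inE lmonoE => /negPf ->.
rewrite big_seq_fset1 (@sum_supp _ _ [fset b]%fset); last first.
- by move=> x ->; rewrite mulr0 mul0r; case: ifP.
- by move=> x; rewrite inE lmonoE => /negPf ->.
by rewrite big_seq_fset1 !lmonoE !eqxx mulr1 eq_sym.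
Qed.


Definition emb (a : 'rV[int]_4) : 'rV[int]_7 := \row_(j < 7)
  match nat_of_ord j with
  | 0 => a 0 (inord 0)
  | 1 => 2 * a 0 (inord 0) + a 0 (inord 1) + a 0 (inord 2) + a 0 (inord 3)
  | 2 => a 0 (inord 2)
  | 3 => a 0 (inord 3)
  | 5 => a 0 (inord 1)
  | _ => 0 end.

Definition proj (v : 'rV[int]_7) : 'rV[int]_4 := \row_(j < 4)
  match nat_of_ord j with
  | 0 => v 0 (inord 0)
  | 1 => v 0 (inord 5)
  | 2 => v 0 (inord 2)
  | _ => v 0 (inord 3) end.

Lemma projK a : proj (emb a) = a.
Proof.
apply/rowP => j; rewrite !mxE.
case: j => [[|[|[|[|j]]]] Hj] //=; rewrite ?mxE ?inordK //=;
  by congr (a 0 _); apply/val_inj; rewrite /= inordK.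
Qed.

Lemma emb_inj : injective emb.
Proof. by move=> a b E; rewrite -(projK a) E projK. Qed.

Lemma embD a b : emb (a + b) = emb a + emb b.
Proof.
apply/rowP => j; rewrite !mxE.
case: j => [[|[|[|[|[|[|[|j]]]]]]] Hj] //=; rewrite ?mxE //; ring.
Qed.

Lemma emb0 : emb 0 = 0.
Proof.
apply/rowP => j; rewrite !mxE.
case: j => [[|[|[|[|[|[|[|j]]]]]]] Hj] //=; rewrite ?mxE //.
Qed.

Definition phi (p : laurent K 4) : laurent K 7 :=
  [fsfun g in [fset emb a | a in finsupp p]%fset =>
     \sum_(a <- finsupp p) (if emb a == g then p a else 0) | 0].

Lemma phiE p g : phi p g = \sum_(a <- finsupp p) (if emb a == g then p a else 0).
Proof.
apply: coef_fs => {}g Hg; apply: big1_seq => a /= ap.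
case: eqP => // eg; case/negP: Hg; rewrite -eg; apply/imfsetP; by exists a.
Qed.

Lemma phi_emb p c : phi p (emb c) = p c.
Proof.
rewrite phiE; have [cp|cp] := boolP (c \in finsupp p).
  rewrite (bigD1_seq c) //= ?fset_uniq // eqxx big1 ?addr0 // => a ac.
  by rewrite (inj_eq emb_inj) (negbTE ac).
move: (cp); rewrite memNfinsupp => /eqP ->; apply: big1_seq => a /= ap.
rewrite (inj_eq emb_inj); case: eqP => // ac; by rewrite -ac ap in cp.
Qed.

Lemma phi_out p g : (forall c, emb c != g) -> phi p g = 0.
Proof. by move=> H; rewrite phiE big1 // => a _; rewrite (negbTE (H a)). Qed.

Lemma phi_ext (X : laurent K 4) (Y : laurent K 7) : (forall c, Y (emb c) = X c) ->
  (forall g, (forall c, emb c != g) -> Y g = 0) -> phi X = Y.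
Proof.
move=> H1 H2; apply/fsfunP => g.
have [E|E] := eqVneq (emb (proj g)) g.
  by rewrite -E phi_emb H1.
have H c : emb c != g by apply: contraNneq E => <-; rewrite projK.
by rewrite phi_out // H2.
Qed.

Lemma reindex p (G : 'rV[int]_7 -> K) : (forall x, phi p x = 0 -> G x = 0) ->
  \sum_(x <- finsupp (phi p)) G x = \sum_(a <- finsupp p) G (emb a).
Proof.
move=> HG; rewrite (@sum_supp _ _ [fset emb a | a in finsupp p]%fset) //; last first.
  by move=> x Hx; rewrite fsfun_fun (negbTE Hx).
rewrite big_imfset /=; last by move=> a b _ _; exact: emb_inj.
done.
Qed.

Lemma phi_genmul W W' p q : (forall a b, W' (emb a) (emb b) = W a b) ->
  phi (genmul W p q) = genmul W' (phi p) (phi q).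
Proof.
move=> HW; apply: phi_ext => [c|g Hg]; rewrite !genmulE.
- rewrite reindex; last by move=> x ->; apply: big1 => y _; rewrite !mul0r; case: ifP.
  apply: eq_bigr => a _; rewrite reindex; last by move=> y ->; rewrite mulr0 mul0r; case: ifP.
  apply: eq_bigr => b _; by rewrite -embD (inj_eq emb_inj) !phi_emb HW.
- rewrite reindex; last by move=> x ->; apply: big1 => y _; rewrite !mul0r; case: ifP.
  apply: big1 => a _; rewrite reindex; last by move=> y ->; rewrite mulr0 mul0r; case: ifP.
  by apply: big1 => b _; rewrite -embD (negbTE (Hg _)).
Qed.

Lemma phi_add p q : phi (ladd p q) = ladd (phi p) (phi q).
Proof.
apply: phi_ext => [c|g Hg]; rewrite !laddE ?phi_emb //.
by rewrite !phi_out ?addr0.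
Qed.

Lemma phi_scale k p : phi (lscale k p) = lscale k (phi p).
Proof.
apply: phi_ext => [c|g Hg]; rewrite !lscaleE ?phi_emb //.
by rewrite !phi_out ?mulr0.
Qed.

Lemma phi_mono a (c : K) : phi (lmono a c) = lmono (emb a) c.
Proof.
apply: phi_ext => [c'|g Hg]; rewrite !lmonoE ?(inj_eq emb_inj) //.
by rewrite eq_sym (negbTE (Hg _)).
Qed.

Lemma phi_mul p q : phi (lmul p q) = lmul (phi p) (phi q).
Proof. by rewrite !lmul_gen; apply: phi_genmul. Qed.

Lemma phi_inj : injective phi.
Proof. by move=> p q E; apply/fsfunP => c; rewrite -phi_emb E phi_emb. Qed.

End S.

Lemma pairing (K : fieldType) (h2 : (2%:R : K) != 0) a b :
  lc_pairing (OmegaIV K) (emb a) (emb b) = lc_pairing (OmegaV K) a b.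
Proof.
rewrite /lc_pairing.
rewrite [RHS](eq_bigr (fun i : 'I_4 => \sum_(j < 4) (((a 0 (inord i))%:~R * (b 0 (inord j))%:~R * OmegaV K i j)))); last first.
  by move=> i _; apply: eq_bigr => j _; rewrite !inord_val.
rewrite !big_ord_recr !big_ord0 /= !mxE /=.
rewrite !intrD !intrM.
have h4 : (4%:R : K) != 0 by rewrite (_ : 4 = 2 * 2)%N // natrM mulf_neq0.
by field; rewrite h2 h4.
Qed.

Lemma pairing_h (K : fieldType) (h2 : (2%:R : K) != 0) b :
  lc_pairing (OmegaIV K) (delta_mx 0 (@Ordinal 7 6 isT)) (emb b) = 0.
Proof.
rewrite /lc_pairing.
rewrite !big_ord_recr !big_ord0 /= !mxE /=.
rewrite !intrD !intrM.
have h4 : (4%:R : K) != 0 by rewrite (_ : 4 = 2 * 2)%N // natrM mulf_neq0.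
by field; rewrite ?h2 ?h4.
Qed.

Lemma lbr_gen (K : fieldType) n (Om : 'M[K]_n) p q :
  lbracket Om p q = genmul (lc_pairing Om) p q.
Proof. by []. Qed.

Theorem mainTheorem4 (K : fieldType) (charK0 : [pchar K] =i pred0) :
  let xV := @lvar K 4 in
  let x := @lvar K 7 in
  let a := x (@Ordinal 7 0 isT) in
  let b := x (@Ordinal 7 1 isT) in
  let c := x (@Ordinal 7 2 isT) in
  let d := x (@Ordinal 7 3 isT) in
  let f := x (@Ordinal 7 5 isT) in
  let h := x (@Ordinal 7 6 isT) in
  exists phi : laurent K 4 -> laurent K 7,
    [/\ (* phi is a K-algebra homomorphism *)
        (forall p q, phi (ladd p q) = ladd (phi p) (phi q)),
        (forall (k : K) p, phi (lscale k p) = lscale k (phi p)),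
        (forall p q, phi (lmul p q) = lmul (phi p) (phi q)),
        phi (lone K 4) = lone K 7 &
     [/\ (* determined by the assignment on the generators *)
        phi (xV (@Ordinal 4 0 isT)) = lmul a (lmul b b),
        phi (xV (@Ordinal 4 1 isT)) = lmul b f,
        phi (xV (@Ordinal 4 2 isT)) = lmul b c,
        phi (xV (@Ordinal 4 3 isT)) = lmul b d &
     [/\ (* Poisson *)
        (forall p q, phi (lbracket (OmegaV K) p q)
                     = lbracket (OmegaIV K) (phi p) (phi q)),
        (* injective *)
        injective phi &
        (* h Poisson commutes with the image *)
        (forall p, lbracket (OmegaIV K) h (phi p) = lzero K 7)]]].
Proof.
move=> xV x a b c d f h.
have h2 : (2%:R : K) != 0 by move/pcharf0P: charK0 => C; rewrite C.
exists (@phi K); split.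
- exact: phi_add.
- exact: phi_scale.
- exact: phi_mul.
- by rewrite /lone phi_mono emb0.
- rewrite /xV /a /b /c /d /f /x /lvar !phi_mono !lmul_mono !mulr1.
  split; try (congr lmono; apply/rowP => j; rewrite !mxE;
  case: j => [[|[|[|[|[|[|[|j]]]]]]] Hj] //=; rewrite ?mxE -?val_eqE /= ?inordK //=).
  split.
  + by move=> p q; rewrite !lbr_gen; apply: phi_genmul => a0 b0; apply: pairing.
  + exact: phi_inj.
  + move=> p; apply/fsfunP => g; rewrite lbr_gen genmulE /lzero lmonoE.
    rewrite (@sum_supp _ _ _ [fset delta_mx 0 (@Ordinal 7 6 isT)]%fset); last first.
    * by move=> y ->; apply: big1 => z _; rewrite !mul0r; case: ifP.
    * by move=> y; rewrite inE /h /x /lvar lmonoE => /negPf ->.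
    rewrite big_seq_fset1 reindex; last by move=> y ->; rewrite mulr0 mul0r; case: ifP.
    rewrite big1 ?if_same // => b0 _; rewrite pairing_h // mulr0; by case: ifP.
Qed.
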